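(* Let $D$ be a square-free integer, let $\mathbb{Z}[\sqrt{D}]$ denote the ring of integers of $\mathbb{Q}(\sqrt{D})$, and let $p$ be a prime integer which is irreducible but not prime in $\mathbb{Z}[\sqrt{D}]$. Let $z\in I_p(D)$. Then (1) $p$ divides $\lVert z\rVert$ in $\mathbb{Z}$, and (2) $\bar{z}\in I_p(D)$. Moreover, for any integer $t\in\mathbb{Z}$, $(\mathbb{Z}\cup R^*\cup tR^* )\cap I_p(D)=\emptyset$, where $R^*=\mathbb{Z}[\sqrt{D}]^{\times}$ is the unit group and $tR^*=\{tu: u\in R^*\}$.
   Context: Here $\mathbb{Z}[\sqrt{D}]=\{a+b\sqrt{D}:a,b\in\mathbb{Z}\}$ if $D\equiv 2,3 \pmod 4$ and $\mathbb{Z}[\sqrt{D}]=\{\frac{a+b\sqrt{D}}{2}:a,b\in\mathbb{Z},\ a\equiv b \pmod 2\}$ if $D\equiv 1\pmod 4$. For $z=x+y\sqrt{D}$ (with $x,y\in\mathbb{Q}$), $\bar z=x-y\sqrt{D}$ is its conjugate and $\lVert z\rVert=z\bar z$ its norm. $\langle a_1,\dots,a_k\rangle$ denotes the ideal generated by $a_1,\dots,a_k$. $I_p(D)$ is the set of all non-unit $z\in\mathbb{Z}[\sqrt{D}]$ such that $z\notin\langle p\rangle$ but there exists $m\in\mathbb{Z}[\sqrt{D}]$ with $m\notin\langle p\rangle$ and $zm\in\langle p\rangle$. *)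

(* Defs.v *)
From HB Require Import structures.
From mathcomp Require Import all_boot all_order all_algebra.
Set Implicit Arguments. Unset Strict Implicit. Unset Printing Implicit Defensive.
Import Order.TTheory GRing.Theory Num.Theory.
Local Open Scope ring_scope.

(* Elements of Q(sqrt D) are represented as pairs (x, y) of rationals,
   standing for x + y sqrt D. *)
Definition qd := (rat * rat)%type.

Definition squarefree (D : int) : Prop :=
  D != 0 /\ forall n : int, (n * n %| D)%Z -> `|n| = 1.

Definition is_int (x : rat) : Prop := exists a : int, x = a%:~R.

Definition inR (D : int) (z : qd) : Prop :=
  if (D %% 4)%Z == 1 then
    exists a b : int, (a %% 2)%Z = (b %% 2)%Z /\ z = (a%:~R / 2, b%:~R / 2)
  else is_int z.1 /\ is_int z.2.

Definition qmul (D : int) (z w : qd) : qd :=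
  (z.1 * w.1 + D%:~R * z.2 * w.2, z.1 * w.2 + z.2 * w.1).

Definition qconj (z : qd) : qd := (z.1, - z.2).

Definition qnorm (D : int) (z : qd) : rat := z.1 ^+ 2 - D%:~R * z.2 ^+ 2.

Definition qone : qd := (1, 0).
Definition qzero : qd := (0, 0).
Definition ofint (t : int) : qd := (t%:~R, 0).

Definition isunit (D : int) (z : qd) : Prop :=
  inR D z /\ exists w, inR D w /\ qmul D z w = qone.

Definition in_ideal (D : int) (a z : qd) : Prop :=
  exists m, inR D m /\ z = qmul D a m.

Definition irreducibleR (D : int) (a : qd) : Prop :=
  inR D a /\ a <> qzero /\ ~ isunit D a /\
  forall b c, inR D b -> inR D c -> a = qmul D b c -> isunit D b \/ isunit D c.

Definition primeR (D : int) (a : qd) : Prop :=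
  inR D a /\ a <> qzero /\ ~ isunit D a /\
  forall b c, inR D b -> inR D c -> in_ideal D a (qmul D b c) ->
    in_ideal D a b \/ in_ideal D a c.

Definition Ip (D : int) (p : nat) (z : qd) : Prop :=
  inR D z /\ ~ isunit D z /\ ~ in_ideal D (ofint p%:Z) z /\
  exists m, inR D m /\ ~ in_ideal D (ofint p%:Z) m /\
            in_ideal D (ofint p%:Z) (qmul D z m).

(* Main.v *)
From HB Require Import structures.
Require Import Defs.
From mathcomp Require Import all_boot all_order all_algebra ring.
Import Order.TTheory GRing.Theory Num.Theory.
Local Open Scope ring_scope.

Lemma par2 (a b : int) : modz a 2 = modz b 2 -> a = b + (divz a 2 - divz b 2) * 2.
Proof. move=> h. rewrite {1}(intdiv.divz_eq a 2) {1}(intdiv.divz_eq b 2) h. ring. Qed.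

Lemma inR1P D z : modz D 4 == 1 ->
  inR D z <-> exists b e : int, z = ((b + e*2)%:~R/2, b%:~R/2).
Proof.
move=> h; rewrite /inR h; split.
  move=> [a [b [hab ->]]]; exists b, (divz a 2 - divz b 2); by rewrite -par2.
move=> [b [e ->]]; exists (b + e * 2), b; split => //.
by rewrite addrC modzMDl.
Qed.

Lemma inR0P D z : modz D 4 != 1 -> inR D z <-> is_int z.1 /\ is_int z.2.
Proof. by move=> h; rewrite /inR (negbTE h). Qed.

Lemma D4 D : modz D 4 == 1 -> D = divz D 4 * 4 + 1.
Proof. move/eqP=> h; by rewrite {1}(intdiv.divz_eq D 4) h. Qed.

Definition qadd (z w : qd) : qd := (z.1 + w.1, z.2 + w.2).

Lemma is_intD x y : is_int x -> is_int y -> is_int (x + y).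
Proof. by move=> [a ->] [b ->]; exists (a + b); rewrite intrD. Qed.
Lemma is_intM x y : is_int x -> is_int y -> is_int (x * y).
Proof. by move=> [a ->] [b ->]; exists (a * b); rewrite intrM. Qed.
Lemma is_intN x : is_int x -> is_int (- x).
Proof. by move=> [a ->]; exists (- a); rewrite mulrNz. Qed.
Lemma is_intZ (a : int) : is_int a%:~R.
Proof. by exists a. Qed.

Lemma inR_add D z w : inR D z -> inR D w -> inR D (qadd z w).
Proof.
case: (boolP (modz D 4 == 1)) => h.
  rewrite !inR1P // => -[b [e ->]] [c [f ->]].
  exists (b + c), (e + f); rewrite /qadd /=; congr (_, _); rewrite !intrD; ring.
move=> /(inR0P _ _ h) [? ?] /(inR0P _ _ h) [? ?]; apply/(inR0P _ _ h); split; exact: is_intD.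
Qed.

Lemma inR_conj D z : inR D z -> inR D (qconj z).
Proof.
case: (boolP (modz D 4 == 1)) => h.
  rewrite !inR1P // => -[b [e ->]].
  exists (- b), (e + b); rewrite /qconj /=; congr (_, _); rewrite ?intrD ?mulrNz ?intrD; ring.
move=> /(inR0P _ _ h) [? ?]; apply/(inR0P _ _ h); split => //; exact: is_intN.
Qed.

Lemma inR_ofint D t : inR D (ofint t).
Proof.
case: (boolP (modz D 4 == 1)) => h.
  rewrite !inR1P //; exists 0, t; rewrite /ofint; congr (_, _); rewrite ?intrD ?intrM; field => //.
apply/(inR0P _ _ h); split; [exact: is_intZ | by exists 0].
Qed.

Lemma inR_mul D z w : inR D z -> inR D w -> inR D (qmul D z w).
Proof.
case: (boolP (modz D 4 == 1)) => h.
  have hD := D4 _ h; set k := divz D 4 in hD.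
  rewrite !inR1P // => -[b [e ->]] [d [f ->]].
  exists (b*d + e*d + b*f), (e*f + k*b*d); rewrite /qmul /= hD; congr (_, _);
  rewrite ?intrD ?intrM; field => //.
move=> /(inR0P _ _ h) [? ?] /(inR0P _ _ h) [? ?]; apply/(inR0P _ _ h); split; rewrite /qmul /=;
 repeat (apply: is_intD || apply: is_intM) => //; exact: is_intZ.
Qed.

Lemma norm_int D z : inR D z -> is_int (qnorm D z).
Proof.
case: (boolP (modz D 4 == 1)) => h.
  have hD := D4 _ h; set k := divz D 4 in hD.
  rewrite !inR1P // => -[b [e ->]].
  exists (b*e + e*e - k*b*b); rewrite /qnorm /= hD; rewrite ?intrD ?intrB ?intrM; field => //.
move=> /(inR0P _ _ h) [? ?]; rewrite /qnorm.
 repeat (apply: is_intD || apply: is_intM || apply: is_intN) => //; exact: is_intZ.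
Qed.
Lemma part1 D p z : prime p -> Ip D p z -> exists k : int, qnorm D z = (k * p%:Z)%:~R.
Proof.
move=> pp [zR [_ [znI [m [mR [mnI [q [qR hq]]]]]]]].
have [k0 hk0] := norm_int _ _ zR.
case: (boolP (dvdz p k0)) => hd.
  by move: hk0; case/dvdzP: hd => k -> ->; exists k.
have: coprimez p k0.
  by rewrite /coprimez /gcdz /=; change (coprime p `|k0|); rewrite prime_coprime.
case/coprimezP => -[u v] /= huv.
exfalso; apply: mnI.
exists (qadd (qmul D (ofint u) m) (qmul D (ofint v) (qmul D (qconj z) q))).
split.
  apply: inR_add; apply: inR_mul => //; first exact: inR_ofint.
  exact: inR_ofint.
  by apply: inR_mul => //; apply: inR_conj.
move: hq hk0 huv; case: z {zR znI} => z1 z2; case: m {mR} => m1 m2; case: q {qR} => q1 q2.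
rewrite /qmul /qnorm /ofint /qadd /qconj /= => -[e1 e2] hn huv.
have huv' : (1 : rat) = u%:~R * p%:~R + v%:~R * k0%:~R.
  by move/(congr1 (fun x : int => x%:~R : rat)): huv; rewrite /= intrD !intrM => ->.
rewrite -hn in huv'.
congr (_, _).
  move: e1 e2; rewrite !(mulr0, mul0r, addr0) => e1 e2.
  transitivity (u%:~R * p%:~R * m1 + v%:~R * (z1 * (p%:~R * q1) - D%:~R * z2 * (p%:~R * q2))); last by ring.
  rewrite -e1 -e2; transitivity (1 * m1); first by rewrite mul1r.
  rewrite {1}huv'; ring.
move: e1 e2; rewrite !(mulr0, mul0r, addr0) => e1 e2.
transitivity (u%:~R * p%:~R * m2 + v%:~R * (z1 * (p%:~R * q2) - z2 * (p%:~R * q1))); last by ring.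
rewrite -e1 -e2; transitivity (1 * m2); first by rewrite mul1r.
rewrite {1}huv'; ring.
Qed.
Lemma qconjK z : qconj (qconj z) = z.
Proof. by case: z => a b; rewrite /qconj /= opprK. Qed.

Lemma qconj_mul D z w : qconj (qmul D z w) = qmul D (qconj z) (qconj w).
Proof. case: z w => a b [c d]; rewrite /qconj /qmul /=; congr (_, _); ring. Qed.

Lemma qconj_ofint t : qconj (ofint t) = ofint t.
Proof. by rewrite /qconj /ofint /= oppr0. Qed.

Lemma in_ideal_conj D p x : in_ideal D (ofint p) x -> in_ideal D (ofint p) (qconj x).
Proof.
move=> [m [mR ->]]; exists (qconj m); split; first exact: inR_conj.
by rewrite qconj_mul qconj_ofint.
Qed.

Lemma Ip_conj D p z : Ip D p z -> Ip D p (qconj z).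
Proof.
move=> [zR [zU [znI [m [mR [mnI hm]]]]]].
split; first exact: inR_conj.
split.
  move=> [_ [w [wR hw]]]; apply: zU; split => //; exists (qconj w); split; first exact: inR_conj.
  by rewrite -(qconjK z) -qconj_mul hw /qconj /qone /= oppr0.
split.
  by move/in_ideal_conj; rewrite qconjK.
exists (qconj m); split; first exact: inR_conj.
split; first by move/in_ideal_conj; rewrite qconjK.
by rewrite -qconj_mul; apply: in_ideal_conj.
Qed.

Lemma dvd_sq p (n : int) : prime p -> dvdz p (n * n) -> exists n' : int, n = n' * p%:Z.
Proof.
move=> pp h; apply/dvdzP.
move: h; rewrite /dvdz abszM /= Euclid_dvdM //.
by case/orP.
Qed.

Lemma ofint_ideal D p (n : int) : in_ideal D (ofint p%:Z) (ofint (n * p%:Z)).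
Proof.
exists (ofint n); split; first exact: inR_ofint.
rewrite /qmul /ofint /=; congr (_, _); rewrite ?intrM; ring.
Qed.

Lemma qnorm_mul D z w : qnorm D (qmul D z w) = qnorm D z * qnorm D w.
Proof. case: z w => a b [c d]; rewrite /qnorm /qmul /=; ring. Qed.

Theorem proposition2p2 (D : int) (p : nat) :
  squarefree D -> D != 1 -> prime p ->
  irreducibleR D (ofint p%:Z) -> ~ primeR D (ofint p%:Z) ->
  (forall z, Ip D p z ->
     (exists k : int, qnorm D z = (k * p%:Z)%:~R) /\ Ip D p (qconj z)) /\
  (forall (t : int) (w : qd),
     ((exists n : int, w = ofint n) \/ isunit D w \/
      (exists u, isunit D u /\ w = qmul D (ofint t) u)) ->
     ~ Ip D p w).
Proof.
move=> _ _ pp _ _; split.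
  move=> z hz; split; [exact: part1 | exact: Ip_conj].
move=> t w [[n ->]|[wU|[u [[uR [w' [w'R hw']]] ->]]]] hI.
- have [k hk] := part1 _ _ _ pp hI.
  have e : n * n = k * p%:Z.
    apply: (@intr_inj rat); rewrite -hk /qnorm /ofint /= intrM; ring.
  have [n' en] := dvd_sq _ _ pp (introT dvdzP (ex_intro _ k e)).
  by case: hI => _ [_ [+ _]]; rewrite en; apply; apply: ofint_ideal.
- by case: hI => _ [].
- have [k hk] := part1 _ _ _ pp hI.
  have [j hj] := norm_int _ _ w'R.
  have hn1 := congr1 (qnorm D) hw'.
  rewrite qnorm_mul hj /qnorm /qone /= in hn1.
  rewrite qnorm_mul in hk.
  have e : t * t = (k * j) * p%:Z.
    apply: (@intr_inj rat); move: hk hn1; set Nu := qnorm D u; rewrite !intrM => hk hn1.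
    transitivity (t%:~R * t%:~R * (Nu * j%:~R) : rat); first by rewrite hn1; ring.
    transitivity (((t%:~R ^+ 2 - D%:~R * 0 ^+ 2) * Nu) * j%:~R : rat); first by ring.
    rewrite hk; ring.
  have [t' et] := dvd_sq _ _ pp (introT dvdzP (ex_intro _ _ e)).
  case: hI => _ [_ [+ _]]; apply.
  exists (qmul D (ofint t') u); split; first by apply: inR_mul => //; apply: inR_ofint.
  rewrite et; case: u {uR hw' hk hn1} => a b; rewrite /qmul /ofint /=; congr (_, _); rewrite ?intrM; ring.
Qed.
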